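(* Let $\Lambda=(\lambda_1,\lambda_2)\in(0,\infty)^2$, $\phi\in[0,1)$ and $0\le\theta<\theta'\le 1$. Let $(X_1,X_2)\sim\mathcal{BZIP}^+(\Lambda,\theta,\phi)$ and $(X_1',X_2')\sim\mathcal{BZIP}^+(\Lambda,\theta',\phi)$, with joint distribution functions $H^+_{\Lambda,\phi,\theta}$ and $H^+_{\Lambda,\phi,\theta'}$. Then $(X_1,X_2)\prec_{PQD}(X_1',X_2')$, i.e. $H^+_{\Lambda,\phi,\theta}(x_1,x_2)\le H^+_{\Lambda,\phi,\theta'}(x_1,x_2)$ for all $(x_1,x_2)\in\mathbb{R}^2$ (the two pairs having identical marginal distributions).
   Context: For $\mu>0$, $G_\mu$ denotes the distribution function of the Poisson distribution with mean $\mu$, and $G_\mu^{-1}(u)=\inf\{x\in\mathbb{N}:G_\mu(x)\ge u\}$ its quantile function (for $\mu=0$, $G_0^{-1}\equiv 0$). The model $\mathcal{BZIP}^{\pm}(\Lambda,\theta,\phi)$, with $\Lambda=(\lambda_1,\lambda_2)\in(0,\infty)^2$, $\theta\in[0,1]$, $\phi\in[0,1)$, is the law of $(X_1,X_2)=W\,(T_1,T_2)$, where: $W\sim$ Bernoulli$(1-\phi)$ (so $P(W=0)=\phi$); $T_j=Y_j+Z_j$ for $j=1,2$; $Y_1\sim\mathcal{P}((1-\theta)\lambda_1)$, $Y_2\sim\mathcal{P}((1-\theta)\lambda_2)$; $U\sim\mathcal U(0,1)$; in the positive-dependence model $\mathcal{BZIP}^+$, $(Z_1,Z_2)=(G^{-1}_{\theta\lambda_1}(U),G^{-1}_{\theta\lambda_2}(U))$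 (comonotonic shock), and in the negative-dependence model $\mathcal{BZIP}^-$, $(Z_1,Z_2)=(G^{-1}_{\theta\lambda_1}(U),G^{-1}_{\theta\lambda_2}(1-U))$ (counter-monotonic shock); $W$, $Y_1$, $Y_2$, $U$ are mutually independent. The law of $(T_1,T_2)$ is denoted $\mathcal{BP}^{\pm}(\Lambda,\theta)$. For random pairs with the same marginals, $(X_1,X_2)\prec_{PQD}(X_1',X_2')$ means $P(X_1\le x_1,X_2\le x_2)\le P(X_1'\le x_1,X_2'\le x_2)$ for all $x_1,x_2$. *)

(* Defs.v *)
From HB Require Import structures.
From mathcomp Require Import all_boot all_order all_algebra.
From mathcomp Require Import all_classical all_reals all_analysis.
Set Implicit Arguments. Unset Strict Implicit. Unset Printing Implicit Defensive.
Import Order.TTheory GRing.Theory Num.Theory.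
Local Open Scope classical_set_scope.
Local Open Scope ring_scope.

Section BZIP.
Context {R : realType}.

(* Poisson(mu) probability mass function, valid also for mu = 0
   (0 ^+ 0 = 1, so Poisson(0) is the Dirac mass at 0). *)
Definition ppmf (mu : R) (k : nat) : R := mu ^+ k / k`!%:R * expR (- mu).

Definition pcdfn (mu : R) (n : nat) : R := \sum_(k < n.+1) ppmf mu k.

Definition pcdf (mu : R) (x : R) : R :=
  if x < 0 then 0 else pcdfn mu (Num.truncn x).

(* Quantile G_mu^{-1}(u) = inf {n in N : G_mu(n) >= u}; G_0^{-1} = 0;
   when the set is empty (only u >= 1, a null event for U ~ U(0,1)) we put 0. *)
Definition pquant (mu : R) (u : R) : nat :=
  if mu == 0 then 0%N else
  match pselect (exists n : nat, u <= pcdfn mu n) with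
  | left h => ex_minn h
  | right _ => 0%N
  end.

(* Joint distribution function of (X1,X2) ~ BZIP^+(Lambda,theta,phi):
   X = W (Y1 + Z1, Y2 + Z2), W ~ Bernoulli(1-phi), Yj ~ P((1-theta) lambda_j),
   (Z1,Z2) = (G^{-1}_{theta l1}(U), G^{-1}_{theta l2}(U)), U ~ U(0,1),
   W, Y1, Y2, U independent.  Conditioning on W and U (independence) gives: *)
Definition Hplus (l1 l2 th ph : R) (x1 x2 : R) : \bar R :=
  (ph * ((0 <= x1) && (0 <= x2))%:R)%:E +
  (1 - ph)%:E *
    (\int[lebesgue_measure]_(u in `]0%R, 1%R[)
       (pcdf ((1 - th) * l1) (x1 - (pquant (th * l1) u)%:R) *
        pcdf ((1 - th) * l2) (x2 - (pquant (th * l2) u)%:R))%:E)%E.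

(* Marginal distribution functions P(X1 <= x) and P(X2 <= x). *)
Definition Hplus1 (l1 th ph : R) (x : R) : \bar R :=
  (ph * (0 <= x)%R%:R)%:E +
  (1 - ph)%:E *
    (\int[lebesgue_measure]_(u in `]0%R, 1%R[)
       (pcdf ((1 - th) * l1) (x - (pquant (th * l1) u)%:R))%:E)%E.

End BZIP.

(* Main.v *)
Require Import Defs.
From HB Require Import structures.
From mathcomp Require Import all_boot all_order all_algebra.
From mathcomp Require Import all_classical all_reals all_analysis.
From mathcomp Require Import measurable_realfun.
From mathcomp Require Import ring lra zify.
Set Implicit Arguments. Unset Strict Implicit. Unset Printing Implicit Defensive.
Import Order.TTheory GRing.Theory Num.Theory.
Local Open Scope classical_set_scope.
Local Open Scope ring_scope.

Section S.
Context {R : realType}.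
Local Notation leb := (@lebesgue_measure R).

Lemma int_step (m : R) : 0 <= m <= 1 ->
  (\int[leb]_(u in `]0%R, 1%R[) (\1_[set v : R | v <= m] u)%:E = m%:E)%E.
Proof.
move=> /andP[m0 m1].
rewrite integral_indic//; last first.
  by rewrite (_ : [set v | v <= m] = `] -oo, m]%classic); [exact: measurable_itv|
   apply/seteqP; split => x /=; rewrite in_itv].
have [mlt|] := ltP m 1.
  rewrite (_ : _ `&` _ = `]0, m]%classic).
    by have := @lebesgue_measure_itv R `]0, m]%R; rewrite /= => ->; rewrite lte_fin; case: ltP => //= ?; [rewrite /= sube0| apply/eqP; rewrite eq_le; apply/andP; split; rewrite lee_fin].
  apply/seteqP; split => x /=; rewrite !in_itv /=.
    by move=> [xm /andP[-> _]].
  by move=> /andP[x0 xm]; split => //; rewrite x0 (le_lt_trans xm mlt).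
move=> m1'; have -> : m = 1 by apply/eqP; rewrite eq_le m1 m1'.
rewrite (_ : _ `&` _ = `]0, 1[%classic).
  by have := @lebesgue_measure_itv R `]0, 1[%R; rewrite /= => ->; rewrite lte_fin ltr01 /= sube0.
apply/seteqP; split => x /=; rewrite !in_itv /=.
  by move=> [xm H].
by move=> /andP[x0 xm]; split => //; [rewrite ltW| rewrite x0 xm].
Qed.

Lemma int_sum (I : Type) (r : seq I) (c m : I -> R) :
  (forall i, 0 <= c i) -> (forall i, 0 <= m i <= 1) ->
  (\int[leb]_(u in `]0%R, 1%R[)
     (\sum_(i <- r) c i * \1_[set v : R | v <= m i] u)%:E =
   (\sum_(i <- r) c i * m i)%:E)%E.
Proof.
move=> c0 m01.
have mA i : [set v : R | v <= m i] = `] -oo, m i]%classic.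
  by apply/seteqP; split => x /=; rewrite in_itv.
under eq_integral do rewrite -sumEFin.
rewrite ge0_integral_sum //.
- rewrite -sumEFin; apply: eq_bigr => i _.
  under eq_integral do rewrite EFinM.
  rewrite ge0_integralZl_EFin //; last first. apply/measurable_EFinP; apply: measurable_indic; rewrite mA; exact: measurable_itv.
  rewrite EFinM; congr (_ * _)%E. exact: int_step.
- move=> i; apply/measurable_EFinP; apply: measurable_funM => //.
  apply: measurable_indic; rewrite mA; exact: measurable_itv.
- by move=> i x _; rewrite lee_fin mulr_ge0.
Qed.
End S.

Section S2.
Context {R : realType}.

Definition conv (a : R) (phi : nat -> R) (n : nat) : R :=
  \sum_(j < n.+1) ppmf a (n - j) * phi j.

Lemma ppmf_ge0 (a : R) k : 0 <= a -> 0 <= ppmf a k.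
Proof.
move=> a0; rewrite /ppmf; apply: mulr_ge0; last exact: expR_ge0.
by apply: divr_ge0; [exact: exprn_ge0|exact: ler0n].
Qed.

Lemma pcdfn0 n : pcdfn (0 : R) n = 1.
Proof.
rewrite /pcdfn big_ord_recl big1 ?addr0.
  by rewrite /ppmf expr0 oppr0 expR0 fact0 divr1 mulr1.
by move=> i _; rewrite /ppmf expr0n /= mul0r mul0r.
Qed.

Lemma pcdfnS (a : R) n : pcdfn a n.+1 = pcdfn a n + ppmf a n.+1.
Proof. by rewrite /pcdfn big_ord_recr. Qed.

Lemma pcdfn_mono (a : R) m n : 0 <= a -> (m <= n)%N -> pcdfn a m <= pcdfn a n.
Proof.
move=> a0; elim: n => [|n IH]; first by rewrite leqn0 => /eqP ->.
rewrite leq_eqVlt => /orP[/eqP -> //|/IH h].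
by rewrite pcdfnS (le_trans h) // lerDl ppmf_ge0.
Qed.

Lemma pcdfn_series (a : R) n :
  pcdfn a n = series (exp_coeff a) n.+1 * expR (- a).
Proof.
rewrite /series /= big_mkord /pcdfn mulr_suml; apply: eq_bigr => i _.
by rewrite /ppmf /exp_coeff.
Qed.

Lemma series_exp_nd (a : R) : 0 <= a -> nondecreasing_seq (series (exp_coeff a)).
Proof.
move=> a0; rewrite /series /=.
by apply: (@nondecreasing_series _ _ predT) => n _ _; exact: exp_coeff_ge0.
Qed.

Lemma pcdfn_le1 (a : R) n : 0 <= a -> pcdfn a n <= 1.
Proof.
move=> a0; rewrite pcdfn_series expRN.
rewrite ler_pdivrMr ?expR_gt0 // mul1r.
exact: nondecreasing_cvgn_le (series_exp_nd a0) (is_cvg_series_exp_coeff a) _.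
Qed.

Lemma pcdfn_ge0 (a : R) n : 0 <= a -> 0 <= pcdfn a n.
Proof. by move=> a0; apply: sumr_ge0 => i _; exact: ppmf_ge0. Qed.

Lemma pcdfn_exists (a : R) u : 0 <= a -> u < 1 -> exists n, u <= pcdfn a n.
Proof.
move=> a0 u1; have [u0|u0] := leP u 0.
  by exists 0%N; rewrite (le_trans u0) // pcdfn_ge0.
apply/not_existsP => /= H.
have Hn n : series (exp_coeff a) n <= u * expR a.
  case: n => [|n].
    by rewrite /series /= big_geq //; apply: mulr_ge0; [exact: ltW|exact: expR_ge0].
  have := H n; rewrite pcdfn_series expRN => /negP; rewrite -ltNge.
  by rewrite ltr_pdivrMr ?expR_gt0 // => /ltW.
have : expR a <= u * expR a.
  by apply: limr_le; [exact: is_cvg_series_exp_coeff|apply: nearW].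
have := expR_gt0 a; move: u1; nra.
Qed.

Lemma ppmf_add (a b : R) m :
  ppmf (a + b) m = \sum_(k < m.+1) ppmf a (m - k) * ppmf b k.
Proof.
rewrite /ppmf exprDn mulr_suml mulr_suml; apply: eq_bigr => -[k /= km] _.
have km' : (k <= m)%N by [].
have hb := bin_fact km'.
have C0 : 'C(m, k)%:R != 0 :> R by rewrite pnatr_eq0 -lt0n bin_gt0.
have F1 : k`!%:R != 0 :> R by rewrite pnatr_eq0 -lt0n fact_gt0.
have F2 : (m - k)`!%:R != 0 :> R by rewrite pnatr_eq0 -lt0n fact_gt0.
have -> : m`!%:R = 'C(m, k)%:R * (k`!%:R * (m - k)`!%:R) :> R.
  by rewrite -hb natrM natrM.
rewrite opprD expRD mulr_natr.
field; rewrite ?C0 ?F1 ?F2 //.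
Qed.

Lemma tri (F : nat -> nat -> R) n :
  \sum_(i < n.+1) \sum_(l < i.+1) F l (i - l)%N =
  \sum_(l < n.+1) \sum_(k < (n - l)%N.+1) F l k.
Proof.
elim: n => [|n IH]; first by rewrite !big_ord1.
rewrite big_ord_recr /= IH [RHS]big_ord_recr /= subnn big_ord1.
rewrite [X in _ + X = _]big_ord_recr /= subnn addrA; congr (_ + _).
rewrite -big_split /=; apply: eq_bigr => -[l /= ln] _.
by rewrite subSn // [in RHS]big_ord_recr.
Qed.

Lemma conv_assoc (a c : R) phi n :
  conv (a + c) phi n = conv a (conv c phi) n.
Proof.
rewrite /conv.
transitivity (\sum_(i < n.+1) \sum_(l < i.+1)
   (fun l k => ppmf a (n - (l + k)) * ppmf c k * phi l) l (i - l)%N); last first.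
  apply: eq_bigr => -[i /= ilt] _; rewrite mulr_sumr; apply: eq_bigr => -[l /= llt] _.
  by rewrite subnKC // mulrA.
rewrite (tri (fun l k => ppmf a (n - (l + k)) * ppmf c k * phi l)); apply: eq_bigr => -[l /= llt] _.
rewrite ppmf_add mulr_suml; apply: eq_bigr => -[k /= klt] _.
by rewrite subnDA.
Qed.

Lemma pcdfn_conv1 (b : R) i : pcdfn b i = conv b (fun _ => 1) i.
Proof.
rewrite /pcdfn /conv (reindex_inj rev_ord_inj) /=; apply: eq_bigr => j _.
by rewrite subSS mulr1.
Qed.

Lemma conv_const (a K : R) n : conv a (fun _ => K) n = K * pcdfn a n.
Proof.
rewrite pcdfn_conv1 /conv mulr_sumr; apply: eq_bigr => j _; by rewrite mulr1 mulrC.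
Qed.

Lemma conv_le (a : R) phi psi n : 0 <= a -> (forall j, phi j <= psi j) ->
  conv a phi n <= conv a psi n.
Proof.
move=> a0 h; apply: ler_sum => j _; apply: ler_wpM2l; [exact: ppmf_ge0|exact: h].
Qed.

Lemma conv_swap (a b : R) (F : nat -> nat -> R) n m :
  conv a (fun j => conv b (F j) m) n = conv b (fun k => conv a (fun j => F j k) n) m.
Proof.
rewrite /conv.
under eq_bigr do rewrite mulr_sumr.
rewrite exchange_big /=; apply: eq_bigr => k _; rewrite mulr_sumr.
by apply: eq_bigr => j _; rewrite mulrCA.
Qed.

Lemma conv_pcdfn (a b : R) n : conv a (pcdfn b) n = pcdfn (a + b) n.
Proof.
rewrite pcdfn_conv1 conv_assoc; apply: eq_bigr => j _.
by rewrite pcdfn_conv1.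
Qed.

Lemma pquant_le (b u : R) j : 0 <= b -> 0 < u -> u < 1 ->
  (u <= pcdfn b j) = (pquant b u <= j)%N.
Proof.
move=> b0 u0 u1; rewrite /pquant; case: eqP => [->|bn0].
  by rewrite pcdfn0 ltW.
case: pselect => [h|nh]; last by exfalso; apply: nh; exact: pcdfn_exists.
case: ex_minnP => Q hQ hmin; apply/idP/idP => [h'|hQj]; first exact: hmin.
exact: le_trans hQ (pcdfn_mono b0 hQj).
Qed.

Lemma sum_trunc (f : nat -> R) m n : (m <= n)%N ->
  \sum_(k < n.+1) f k * (k <= m)%N%:R = \sum_(k < m.+1) f k.
Proof.
move=> mn; rewrite (big_ord_widen n.+1 f (_ : m.+1 <= n.+1)%N) // [RHS]big_mkcond.
by apply: eq_bigr => k _; rewrite ltnS; case: (_ <= _)%N; rewrite ?mulr1 ?mulr0.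
Qed.

Lemma pcdf_conv (a b x u : R) : 0 <= a -> 0 <= b -> 0 <= x -> 0 < u -> u < 1 ->
  pcdf a (x - (pquant b u)%:R) =
  conv a (fun j => \1_[set v : R | v <= pcdfn b j] u) (Num.truncn x).
Proof.
move=> a0 b0 x0 u0 u1.
set Q := pquant b u; set n := Num.truncn x.
have hI j : \1_[set v : R | v <= pcdfn b j] u = (Q <= j)%N%:R :> R.
  rewrite indicE -(pquant_le j b0 u0 u1).
  case: (boolP (u <= pcdfn b j)) => h; first by rewrite mem_set.
  by rewrite memNset //; apply/negP.
rewrite /conv (eq_bigr (fun j : 'I_n.+1 => ppmf a (n - j) * (Q <= j)%N%:R)); last by move=> j _; rewrite hI.
have hx := truncn_itv x0; rewrite -/n in hx.
have [Qn|nQ] := leqP Q n.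
- have QR : Q%:R <= n%:R :> R by rewrite ler_nat.
  have xQ : 0 <= x - Q%:R by move: hx; lra.
  rewrite /pcdf ltNge xQ /=.
  have -> : Num.truncn (x - Q%:R) = (n - Q)%N.
    apply: truncn_def; rewrite -addn1 natrD natrB //; move: hx; rewrite -addn1 natrD; lra.
  rewrite /pcdfn -(sum_trunc _ (leq_subr Q n)) [RHS](reindex_inj rev_ord_inj) /=.
  apply: eq_bigr => j _; rewrite subSS subKn; last by rewrite -ltnS.
  congr (_ * _%:R); have jn : (j <= n)%N by rewrite -ltnS. 
  by rewrite (leq_subRL _ Qn) (leq_subRL _ jn) addnC.
- rewrite big1; last by move=> j _; rewrite leqNgt (leq_trans (ltn_ord j) nQ) mulr0.
  rewrite /pcdf ifT //.
  have : n.+1%:R <= Q%:R :> R by rewrite ler_nat.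
  by move: hx; lra.
Qed.
End S2.

Section S3.
Context {R : realType}.

Definition S (a1 a2 b1 b2 : R) n1 n2 :=
  conv a1 (fun j1 => conv a2 (fun j2 => Num.min (pcdfn b1 j1) (pcdfn b2 j2)) n2) n1.

Lemma conv_ext (a : R) phi psi n : (forall j, phi j = psi j) ->
  conv a phi n = conv a psi n.
Proof. by move=> h; apply: eq_bigr => j _; rewrite h. Qed.

Lemma S_mono (l1 l2 th th' : R) n1 n2 : 0 < l1 -> 0 < l2 -> 0 <= th -> th <= th' -> th' <= 1 ->
  S ((1 - th) * l1) ((1 - th) * l2) (th * l1) (th * l2) n1 n2 <=
  S ((1 - th') * l1) ((1 - th') * l2) (th' * l1) (th' * l2) n1 n2.
Proof.
move=> l10 l20 th0 thth th1.
have a1 : 0 <= (1 - th') * l1 by apply: mulr_ge0; lra.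
have a2 : 0 <= (1 - th') * l2 by apply: mulr_ge0; lra.
have c1 : 0 <= (th' - th) * l1 by apply: mulr_ge0; lra.
have c2 : 0 <= (th' - th) * l2 by apply: mulr_ge0; lra.
have b1 : 0 <= th * l1 by apply: mulr_ge0; lra.
have b2 : 0 <= th * l2 by apply: mulr_ge0; lra.
have e1 : (1 - th) * l1 = (1 - th') * l1 + (th' - th) * l1 by ring.
have e2 : (1 - th) * l2 = (1 - th') * l2 + (th' - th) * l2 by ring.
have f1 : th' * l1 = (th' - th) * l1 + th * l1 by ring.
have f2 : th' * l2 = (th' - th) * l2 + th * l2 by ring.
rewrite /S e1 e2.
set M := fun j1 j2 => Num.min (pcdfn (th * l1) j1) (pcdfn (th * l2) j2).
set a1' := (1 - th') * l1; set a2' := (1 - th') * l2.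
set c1' := (th' - th) * l1; set c2' := (th' - th) * l2.
have -> : conv (a1' + c1') (fun j1 => conv (a2' + c2') (M j1) n2) n1 =
  conv a1' (fun i1 => conv a2' (fun i2 => conv c1' (fun j1 => conv c2' (M j1) i2) i1) n2) n1.
  rewrite conv_assoc; apply: conv_ext => i1.
  transitivity (conv c1' (fun j => conv a2' (fun k => conv c2' (M j) k) n2) i1);
    last exact: conv_swap.
  by apply: conv_ext => j; exact: conv_assoc.
apply: conv_le => // i1; apply: conv_le => // i2.
rewrite le_min; apply/andP; split.
- apply: (@le_trans _ _ (conv ((th' - th) * l1) (pcdfn (th * l1)) i1)).
    apply: conv_le => // j1.
    apply: (@le_trans _ _ (conv ((th' - th) * l2) (fun _ => pcdfn (th * l1) j1) i2)).
      by apply: conv_le => // j2; rewrite ge_min lexx.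
    by rewrite conv_const; apply: ler_piMr; [apply: pcdfn_ge0|apply: pcdfn_le1].
  by rewrite conv_pcdfn f1.
- apply: (@le_trans _ _ (conv ((th' - th) * l1) (fun _ => pcdfn (th' * l2) i2) i1)).
    apply: conv_le => // j1; rewrite f2 -conv_pcdfn.
    by apply: conv_le => // j2; rewrite ge_min lexx orbT.
  by rewrite conv_const; apply: ler_piMr; [apply: pcdfn_ge0|apply: pcdfn_le1] => //; apply: mulr_ge0; lra.
Qed.
End S3.

Section S4.
Context {R : realType}.
Local Notation leb := (@lebesgue_measure R).

Lemma indic_le (m u : R) : \1_[set v : R | v <= m] u = (u <= m)%R%:R :> R.
Proof.
rewrite indicE; case: (boolP (u <= m)) => h; first by rewrite mem_set.
by rewrite memNset //; apply/negP.
Qed.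

Lemma int_marg (a b x : R) : 0 <= a -> 0 <= b -> 0 <= x ->
  (\int[leb]_(u in `]0%R, 1%R[) (pcdf a (x - (pquant b u)%:R))%:E =
   (conv a (pcdfn b) (Num.truncn x))%:E)%E.
Proof.
move=> a0 b0 x0.
transitivity (\int[leb]_(u in `]0%R, 1%R[) (\sum_(j < (Num.truncn x).+1)
   ppmf a (Num.truncn x - j) * \1_[set v : R | v <= pcdfn b j] u)%:E)%E; last first.
  rewrite int_sum //; first by move=> j; exact: ppmf_ge0.
  by move=> j; rewrite pcdfn_ge0 ?pcdfn_le1.
apply: eq_integral => u; rewrite inE /= in_itv /= => /andP[u0 u1].
by rewrite pcdf_conv.
Qed.


Lemma int_joint (a1 a2 b1 b2 x1 x2 : R) : 0 <= a1 -> 0 <= a2 -> 0 <= b1 -> 0 <= b2 ->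
  0 <= x1 -> 0 <= x2 ->
  (\int[leb]_(u in `]0%R, 1%R[)
     (pcdf a1 (x1 - (pquant b1 u)%:R) * pcdf a2 (x2 - (pquant b2 u)%:R))%:E =
   (S a1 a2 b1 b2 (Num.truncn x1) (Num.truncn x2))%:E)%E.
Proof.
move=> a10 a20 b10 b20 x10 x20.
set n1 := Num.truncn x1; set n2 := Num.truncn x2.
transitivity (\int[leb]_(u in `]0%R, 1%R[) (\sum_(p : 'I_n1.+1 * 'I_n2.+1)
   (ppmf a1 (n1 - p.1) * ppmf a2 (n2 - p.2)) *
   \1_[set v : R | v <= Num.min (pcdfn b1 p.1) (pcdfn b2 p.2)] u)%:E)%E; last first.
  rewrite int_sum.
  - congr EFin; rewrite /S /conv; under [RHS]eq_bigr do rewrite mulr_sumr.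
    by rewrite pair_bigA /=; apply: eq_bigr => p _; rewrite !mulrA.
  - by move=> p; apply: mulr_ge0; exact: ppmf_ge0.
  - by move=> p; rewrite le_min ge_min !pcdfn_ge0 ?pcdfn_le1.
apply: eq_integral => u; rewrite inE /= in_itv /= => /andP[u0 u1].
congr EFin; rewrite !pcdf_conv // /conv big_distrlr /=.
rewrite pair_bigA /=; apply: eq_bigr => p _.
rewrite !indic_le le_min; case: (u <= _); case: (u <= _); simpl; ring.
Qed.

End S4.

Lemma pcdf_neg (R : realType) (a x : R) k : x < 0 -> pcdf a (x - k%:R) = 0.
Proof. by move=> x0; rewrite /pcdf ifT //; have := ler0n R k; lra. Qed.

Unset Implicit Arguments.
Local Close Scope classical_set_scope.


Theorem corollary1 (R : realType) (l1 l2 ph th th' : R) :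
  0 < l1 -> 0 < l2 -> 0 <= ph -> ph < 1 ->
  0 <= th -> th < th' -> th' <= 1 ->
  (* identical marginals *)
  (forall x : R, Hplus1 l1 th ph x = Hplus1 l1 th' ph x) /\
  (forall x : R, Hplus1 l2 th ph x = Hplus1 l2 th' ph x) /\
  (* PQD ordering of the joint distribution functions *)
  (forall x1 x2 : R, (Hplus l1 l2 th ph x1 x2 <= Hplus l1 l2 th' ph x1 x2)%E).
Proof.
move=> l10 l20 ph0 ph1 th0 thth th1.
have nn (l t : R) : 0 < l -> 0 <= t -> t <= 1 -> 0 <= (1 - t) * l /\ 0 <= t * l.
  by move=> l0 t0 t1; split; apply: mulr_ge0; lra.
have marg l (l0 : 0 < l) x : Hplus1 l th ph x = Hplus1 l th' ph x.
  rewrite /Hplus1; congr (_ + _ * _)%E.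
  have [x0|x0] := ltP x 0.
    by rewrite !integral0_eq // => u _; rewrite pcdf_neg.
  have [h1 h2] := nn l th l0 th0 (ltW (lt_le_trans thth th1)).
  have [h3 h4] := nn l th' l0 (le_trans th0 (ltW thth)) th1.
  rewrite !int_marg // !conv_pcdfn.
  by have -> : (1 - th) * l + th * l = (1 - th') * l + th' * l by ring.
split; first exact: marg.
split; first exact: marg.
move=> x1 x2; rewrite /Hplus; apply: leeD => //.
apply: lee_wpmul2l; first by rewrite lee_fin; lra.
have [x10|x10] := ltP x1 0.
  by rewrite !integral0_eq // => u _; rewrite pcdf_neg ?mul0r.
have [x20|x20] := ltP x2 0.
  by rewrite !integral0_eq // => u _; rewrite (pcdf_neg _ _ x20) ?mulr0.
have [h1 h2] := nn l1 th l10 th0 (ltW (lt_le_trans thth th1)).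
have [h3 h4] := nn l1 th' l10 (le_trans th0 (ltW thth)) th1.
have [h5 h6] := nn l2 th l20 th0 (ltW (lt_le_trans thth th1)).
have [h7 h8] := nn l2 th' l20 (le_trans th0 (ltW thth)) th1.
rewrite !int_joint // lee_fin.
by apply: S_mono => //; exact: ltW.
Qed.
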